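(* Let $M_1$ and $M_2$ be matroids on a finite set $E$ with rank functions $r_1,r_2$, and let $G$ be their mixing graph. If $A,B\in\mathscr{X}$ and $|A\triangle B|\le2$, then $G$ contains a path from $A$ to $B$.
   Context: Let $\mathscr{X}=\{A\subseteq E: r_1(A)\ne r_2(A)\}$. The mixing graph $G=G_{M_1,M_2}$ has vertex set $\mathscr{X}$, and $AB$ is an edge iff either (i) $A\subsetneq B$ or $B\subsetneq A$, or (ii) $A\cap B\notin\mathscr{X}$, $A\cup B\notin\mathscr{X}$, and $|A\triangle B|=2$. Here $\triangle$ denotes symmetric difference. *)

(* Defs.v *)
From mathcomp Require Import all_boot.
Set Implicit Arguments. Unset Strict Implicit. Unset Printing Implicit Defensive.

Definition is_matroid_rank (T : finType) (r : {set T} -> nat) : Prop :=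
  [/\ (forall A : {set T}, r A <= #|A|),
      (forall A B : {set T}, A \subset B -> r A <= r B) &
      (forall A B : {set T}, r (A :|: B) + r (A :&: B) <= r A + r B)].

Definition symdiff (T : finType) (A B : {set T}) : {set T} :=
  (A :\: B) :|: (B :\: A).

Definition mixX (T : finType) (r1 r2 : {set T} -> nat) (A : {set T}) : bool :=
  r1 A != r2 A.

Definition mix_edge (T : finType) (r1 r2 : {set T} -> nat) : rel {set T} :=
  fun A B =>
    [&& mixX r1 r2 A, mixX r1 r2 B &
        [|| (A \proper B), (B \proper A) |
            [&& ~~ mixX r1 r2 (A :&: B), ~~ mixX r1 r2 (A :|: B)
              & #|symdiff A B| == 2]]].

Definition mix_path (T : finType) (r1 r2 : {set T} -> nat) (A B : {set T}) : Prop :=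
  mixX r1 r2 A /\ exists s : seq {set T}, path (mix_edge r1 r2) A s /\ last A s = B.

(* Main.v *)
Require Import Defs.
From mathcomp Require Import all_boot.

Theorem lemma3p7 (T : finType) (r1 r2 : {set T} -> nat)
  (M1 : is_matroid_rank r1) (M2 : is_matroid_rank r2)
  (A B : {set T}) :
  mixX r1 r2 A -> mixX r1 r2 B -> #|symdiff A B| <= 2 ->
  mix_path r1 r2 A B.
Proof.
move=> XA XB hc; split => //.
have one : A \proper B \/ B \proper A -> mix_path r1 r2 A B.
  move=> h; split => //; exists [:: B]; split => //=.
  by rewrite /mix_edge XA XB /=; case: h => ->; rewrite ?orbT.
case: (boolP (A \subset B)) => sAB.
  case: (eqVneq A B) => [->|nAB]; first by exists [::].
  by case: (one (or_introl _)) => //; rewrite properEneq nAB.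
case: (boolP (B \subset A)) => sBA.
  case: (eqVneq B A) => [->|nBA]; first by exists [::].
  by case: (one (or_intror _)) => //; rewrite properEneq nBA.
have pIA : A :&: B \proper A.
  by rewrite properEneq subsetIl andbT; apply: contra sAB => /eqP <-; rewrite subsetIr.
have pIB : A :&: B \proper B.
  by rewrite properEneq subsetIr andbT; apply: contra sBA => /eqP <-; rewrite subsetIl.
have pUA : A \proper A :|: B.
  rewrite properEneq subsetUl andbT; apply: contra sBA => /eqP ->.
  by rewrite subsetUr.
have pUB : B \proper A :|: B.
  rewrite properEneq subsetUr andbT; apply: contra sAB => /eqP ->.
  by rewrite subsetUl.
case: (boolP (mixX r1 r2 (A :&: B))) => XI.
  exists [:: A :&: B; B]; split => //=.
  by rewrite /mix_edge XA XB XI pIA pIB /= ?orbT.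
case: (boolP (mixX r1 r2 (A :|: B))) => XU.
  exists [:: A :|: B; B]; split => //=.
  by rewrite /mix_edge XA XB XU pUA pUB /= ?orbT.
exists [:: B]; split => //=; rewrite andbT /mix_edge XA XB XI XU /=.
apply/orP; right; apply/orP; right.
have e : (A :\: B) :&: (B :\: A) = set0.
  by apply/setP => x; rewrite !inE; case: (x \in A); case: (x \in B).
rewrite eqn_leq hc /= /symdiff.
have := cardsUI (A :\: B) (B :\: A); rewrite e cards0 addn0 => ->.
have h1 : 0 < #|A :\: B| by rewrite card_gt0 setD_eq0.
have h2 : 0 < #|B :\: A| by rewrite card_gt0 setD_eq0.
by rewrite -(addn1 1) leq_add.
Qed.
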